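(* Let $d\in \mathbb{N}$. Then the following are equivalent: (i) Every bilipschitz mapping $f\colon \mathbb{Z}^{d}\to \mathbb{R}^{d}$ admits a bilipschitz mapping $F\colon \mathbb{R}^{d}\to\mathbb{R}^{d}$ with $F|_{\mathbb{Z}^{d}}=f$. (ii) For every separated net $A$ of $\mathbb{R}^{d}$ and every bilipschitz mapping $f\colon A\to \mathbb{R}^{d}$ there is a bilipschitz mapping $F\colon \mathbb{R}^{d}\to\mathbb{R}^{d}$ with $F|_{A}=f$. Furthermore, if (i) holds with $\operatorname{bilip}(F)\leq C_{d}(\operatorname{bilip}(f))$ for some monotone increasing function $C_{d}\colon [1,\infty)\to [1,\infty)$, then (ii) holds with \[\operatorname{bilip}(F)\leq K\cdot C_{d}\big(24\sqrt{d}R^{2}K^{3}\operatorname{bilip}(f)\big),\] where $K:= 16\max\{\frac{3d}{r},1\}$ and $A$ is an $r$-separated $R$-net (i.e. $R$ and $r$ are the net and separation constants of $A$).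
   Context: $\|\cdot\|$ is the Euclidean norm. A set $A\subseteq\mathbb{R}^d$ is $r$-separated if $\|a-a'\|\geq r$ for all distinct $a,a'\in A$; it is an $R$-net if for every $x\in\mathbb{R}^d$ there is $a\in A$ with $\|x-a\|\leq R$; a separated net is a set that is an $r$-separated $R$-net for some $r,R>0$. For a mapping $f$, $\operatorname{Lip}(f)=\sup_{x\neq y}\|f(y)-f(x)\|/\|y-x\|$; for injective $f$, $\operatorname{bilip}(f)=\max\{\operatorname{Lip}(f),\operatorname{Lip}(f^{-1})\}$. $f$ is $L$-bilipschitz if $\operatorname{bilip}(f)\le L$, and bilipschitz if it is $L$-bilipschitz for some finite $L$. *)

(* Defs.v *)
From HB Require Import structures.
From mathcomp Require Import all_boot all_order all_algebra.
From mathcomp Require Import all_classical all_reals.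
Set Implicit Arguments. Unset Strict Implicit. Unset Printing Implicit Defensive.
Import Order.TTheory GRing.Theory Num.Theory.
Local Open Scope ring_scope.
Local Open Scope classical_set_scope.

Section Defs.
Variables (R : realType) (d : nat).
Notation vec := 'rV[R]_d.

Definition enorm (x : vec) : R := Num.sqrt (\sum_(i < d) x ord0 i ^+ 2).

Definition Zd : set vec := [set x | forall i : 'I_d, x ord0 i \is a Num.int].

Definition separated (r : R) (A : set vec) : Prop :=
  forall a a', A a -> A a' -> a != a' -> r <= enorm (a - a').

Definition is_net (Rn : R) (A : set vec) : Prop :=
  forall x : vec, exists2 a, A a & enorm (x - a) <= Rn.

Definition separated_net (A : set vec) : Prop :=
  exists r Rn : R, [/\ 0 < r, 0 < Rn, separated r A & is_net Rn A].

(* A mapping A -> R^d is represented by a total function; only its values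
   on A matter. *)
Definition Lip_on (A : set vec) (f : vec -> vec) : R :=
  sup [set q | exists x y, [/\ A x, A y, x != y &
        q = enorm (f y - f x) / enorm (y - x)]].

(* Lip(f^{-1}) on f(A), written through the parametrisation by A
   (f injective on A). *)
Definition Lipinv_on (A : set vec) (f : vec -> vec) : R :=
  sup [set q | exists x y, [/\ A x, A y, x != y &
        q = enorm (y - x) / enorm (f y - f x)]].

Definition bilip_on (A : set vec) (f : vec -> vec) : R :=
  Num.max (Lip_on A f) (Lipinv_on A f).

Definition L_bilip_on (L : R) (A : set vec) (f : vec -> vec) : Prop :=
  {in A &, injective f} /\
  forall x y, A x -> A y ->
    enorm (f y - f x) <= L * enorm (y - x) /\
    enorm (y - x) <= L * enorm (f y - f x).

Definition bilip_map_on (A : set vec) (f : vec -> vec) : Prop :=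
  exists L : R, L_bilip_on L A f.

Definition extends (A : set vec) (F f : vec -> vec) : Prop :=
  forall a, A a -> F a = f a.

End Defs.

(* Main.v *)
Require Import Defs.
From HB Require Import structures.
From mathcomp Require Import all_boot all_order all_algebra.
From mathcomp Require Import all_classical all_reals.
From mathcomp Require Import ring lra.
Import Order.TTheory GRing.Theory Num.Theory.
Local Open Scope ring_scope.
Local Open Scope classical_set_scope.
Set Implicit Arguments. Unset Strict Implicit. Unset Printing Implicit Defensive.

Section Enorm.
Variables (R : realType) (d : nat).
Notation vec := 'rV[R]_d.
Implicit Types x y z : vec.

Definition ssq x := \sum_(i < d) x ord0 i ^+ 2.

Lemma ssq_ge0 x : 0 <= ssq x.
Proof. by apply: sumr_ge0 => i _; rewrite sqr_ge0. Qed.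

Lemma enorm_ge0 x : 0 <= enorm x.
Proof. exact: sqrtr_ge0. Qed.

Lemma enorm_sqr x : enorm x ^+ 2 = ssq x.
Proof. by rewrite /enorm sqr_sqrtr // ssq_ge0. Qed.

Lemma enorm_coord x i : `|x ord0 i| <= enorm x.
Proof.
rewrite /enorm -sqrtr_sqr ler_sqrt; last exact: ssq_ge0.
rewrite (bigD1 i) //= lerDl; apply: sumr_ge0 => j _; exact: sqr_ge0.
Qed.

Lemma enorm_eq0 x : enorm x = 0 -> x = 0.
Proof.
move=> h; apply/rowP => i; rewrite mxE; apply/eqP.
by rewrite -normr_le0 -h enorm_coord.
Qed.

Lemma enorm0 : enorm (0 : vec) = 0.
Proof.
rewrite /enorm big1 ?sqrtr0 // => i _; by rewrite mxE expr0n.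
Qed.

Lemma enormZ k x : enorm (k *: x) = `|k| * enorm x.
Proof.
rewrite /enorm -sqrtr_sqr -sqrtrM ?sqr_ge0 //; congr Num.sqrt.
rewrite mulr_sumr; apply: eq_bigr => i _; rewrite mxE; exact: exprMn.
Qed.

Lemma enormN x : enorm (- x) = enorm x.
Proof. by rewrite -scaleN1r enormZ normrN normr1 mul1r. Qed.

Lemma enormB x y : enorm (x - y) = enorm (y - x).
Proof. by rewrite -enormN opprB. Qed.

Lemma cauchy_schwarz x y :
  \sum_(i < d) x ord0 i * y ord0 i <= enorm x * enorm y.
Proof.
set a := enorm x; set b := enorm y.
have [a0|apos] := eqVneq a 0.
  rewrite a0 mul0r big1 // => i _; by rewrite (enorm_eq0 a0) mxE mul0r.
have [b0|bpos] := eqVneq b 0.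
  rewrite b0 mulr0 big1 // => i _; by rewrite (enorm_eq0 b0) mxE mulr0.
have ha : 0 < a by rewrite lt_def apos enorm_ge0.
have hb : 0 < b by rewrite lt_def bpos enorm_ge0.
have key : (2 * a * b) * \sum_(i < d) x ord0 i * y ord0 i <= 2 * a ^+ 2 * b ^+ 2.
  have -> : 2 * a ^+ 2 * b ^+ 2 = b ^+ 2 * ssq x + a ^+ 2 * ssq y.
    rewrite -!enorm_sqr -/a -/b; ring.
  rewrite /ssq !mulr_sumr -big_split /=; apply: ler_sum => i _.
  have := sqr_ge0 (b * x ord0 i - a * y ord0 i); move=> hq.
  rewrite -subr_ge0; apply: le_trans hq _; rewrite le_eqVlt; apply/orP; left; apply/eqP; ring.
have hab : 0 < 2 * a * b by rewrite !mulr_gt0.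
rewrite -(ler_pM2l hab); apply: (le_trans key); rewrite le_eqVlt; apply/orP; left; apply/eqP; ring.
Qed.

Lemma enormD x y : enorm (x + y) <= enorm x + enorm y.
Proof.
rewrite {1}/enorm -(ger0_norm (addr_ge0 (enorm_ge0 x) (enorm_ge0 y))) -sqrtr_sqr.
rewrite ler_sqrt ?sqr_ge0 //.
have -> : \sum_(i < d) (x + y) ord0 i ^+ 2 =
   ssq x + ssq y + 2 * \sum_(i < d) x ord0 i * y ord0 i.
  rewrite /ssq mulr_sumr -!big_split /=; apply: eq_bigr => i _; rewrite mxE; ring.
have := cauchy_schwarz x y; rewrite -!enorm_sqr; nra.
Qed.

Lemma enorm_tri x y z : enorm (x - z) <= enorm (x - y) + enorm (y - z).
Proof. have -> : x - z = (x - y) + (y - z) by rewrite addrA subrK. exact: enormD. Qed.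

Lemma enorm_rev x y z : enorm (x - z) - enorm (y - z) <= enorm (x - y).
Proof. have := enorm_tri x y z; lra. Qed.

Lemma enorm_le_coord x m : 0 <= m -> (forall i, `|x ord0 i| <= m) -> enorm x <= d%:R * m.
Proof.
move=> m0 h; rewrite /enorm -(ger0_norm (mulr_ge0 (ler0n _ d) m0)) -sqrtr_sqr.
rewrite ler_sqrt ?sqr_ge0 //.
apply: (@le_trans _ _ (\sum_(i < d) m ^+ 2)).
  apply: ler_sum => i _; rewrite -real_normK ?num_real //.
  by rewrite lerXn2r ?nnegrE ?normr_ge0.
rewrite sumr_const card_ord -mulr_natr exprMn.
have hd : (d%:R : R) <= d%:R ^+ 2.
  rewrite -natrX ler_nat; case: (d) => // n; by rewrite expnS leq_pmulr // expn_gt0.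
have hm := sqr_ge0 m.
nra.
Qed.
End Enorm.

Section Bilip.
Variables (R : realType) (d : nat).
Notation vec := 'rV[R]_d.

Lemma sup_le_bound (E : set R) B : 0 <= B -> (forall q, E q -> q <= B) -> sup E <= B.
Proof.
move=> B0 h; have [ne|e] := pselect (E !=set0).
  by apply: ge_sup => // q /h.
have -> : E = set0.
  by apply/seteqP; split=> q // Eq; exfalso; apply: e; exists q.
by rewrite sup0.
Qed.

Lemma enorm_pos (x y : vec) : x != y -> 0 < enorm (y - x).
Proof.
move=> xy; rewrite lt_def enorm_ge0 andbT; apply/eqP => /enorm_eq0 /eqP.
by rewrite subr_eq0 eq_sym (negbTE xy).
Qed.

Lemma inj_ne (A : set vec) (f : vec -> vec) x y : {in A &, injective f} -> A x -> A y -> x != y -> f x != f y.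
Proof.
move=> inj Ax Ay; apply: contra => /eqP e; apply/eqP; apply: inj => //; exact: mem_set.
Qed.

Lemma bilip_le (L : R) (A : set vec) f : 0 <= L -> L_bilip_on L A f -> bilip_on A f <= L.
Proof.
move=> L0 [inj h]; rewrite /bilip_on ge_max; apply/andP; split;
  apply: sup_le_bound => // q [x [y [Ax Ay xy ->]]]; have [h1 h2] := h x y Ax Ay.
  by rewrite ler_pdivrMr ?enorm_pos // mulrC.
have fxy : f x != f y by exact: (inj_ne inj Ax Ay xy).
by rewrite ler_pdivrMr ?enorm_pos // mulrC.
Qed.

Lemma bilip_self (L : R) (A : set vec) f x0 y0 : A x0 -> A y0 -> x0 != y0 ->
  L_bilip_on L A f -> 1 <= bilip_on A f /\ L_bilip_on (bilip_on A f) A f.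
Proof.
move=> Ax0 Ay0 xy0 [inj h].
have fne x y : A x -> A y -> x != y -> f x != f y.
  by move=> Ax Ay xy; exact: (inj_ne inj Ax Ay xy).
set S1 := [set q | exists x y, [/\ A x, A y, x != y &
        q = enorm (f y - f x) / enorm (y - x)]].
set S2 := [set q | exists x y, [/\ A x, A y, x != y &
        q = enorm (y - x) / enorm (f y - f x)]].
have hS1 : has_sup S1.
  split; first by exists (enorm (f y0 - f x0) / enorm (y0 - x0)), x0, y0.
  exists L => q [x [y [Ax Ay xy ->]]]; have [h1 h2] := h x y Ax Ay.
  by rewrite ler_pdivrMr ?enorm_pos // mulrC.
have hS2 : has_sup S2.
  split; first by exists (enorm (y0 - x0) / enorm (f y0 - f x0)), x0, y0.
  exists L => q [x [y [Ax Ay xy ->]]]; have [h1 h2] := h x y Ax Ay.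
  by rewrite ler_pdivrMr ?enorm_pos ?fne // mulrC.
have le1 : sup S1 <= bilip_on A f by rewrite /bilip_on le_max lexx.
have le2 : sup S2 <= bilip_on A f by rewrite /bilip_on le_max lexx orbT.
split.
  have q1 := sup_upper_bound hS1 (ex_intro _ x0 (ex_intro _ y0 (And4 Ax0 Ay0 xy0 erefl))).
  have q2 := sup_upper_bound hS2 (ex_intro _ x0 (ex_intro _ y0 (And4 Ax0 Ay0 xy0 erefl))).
  have p1 := enorm_pos xy0; have p2 := enorm_pos (fne _ _ Ax0 Ay0 xy0).
  set a := enorm (y0 - x0) in q1 q2 p1; set b := enorm (f y0 - f x0) in q1 q2 p2.
  have : b / a * (a / b) = 1 by rewrite mulrA divfK ?gt_eqF // divff // gt_eqF.
  set u := b / a; set v := a / b.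
  have u0 : 0 < u by rewrite divr_gt0.
  have v0 : 0 < v by rewrite divr_gt0.
  move=> uv; have : u <= bilip_on A f by apply: le_trans le1.
  have : v <= bilip_on A f by apply: le_trans le2.
  nra.
split=> // x y Ax Ay; have [->|xy] := eqVneq x y.
  by rewrite !subrr enorm0 mulr0.
have q1 := sup_upper_bound hS1 (ex_intro _ x (ex_intro _ y (And4 Ax Ay xy erefl))).
have q2 := sup_upper_bound hS2 (ex_intro _ x (ex_intro _ y (And4 Ax Ay xy erefl))).
move: q1 q2; rewrite !ler_pdivrMr ?enorm_pos ?fne // => q1 q2.
have e1 := enorm_ge0 (y - x); have e2 := enorm_ge0 (f y - f x).
split; nra.
Qed.

Lemma bilip_trivial (A : set vec) f : (forall x y : vec, x = y) -> bilip_on A f = 0.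
Proof.
move=> all.
have E (S : set R) : (forall q, ~ S q) -> sup S = 0.
  move=> h; have -> : S = set0 by apply/seteqP; split=> q // /h.
  exact: sup0.
have h1 : Lip_on A f = 0 by apply: E => q [x [y [_ _ xy _]]]; rewrite (all x y) eqxx in xy.
have h2 : Lipinv_on A f = 0 by apply: E => q [x [y [_ _ xy _]]]; rewrite (all x y) eqxx in xy.
by rewrite /bilip_on h1 h2; apply/eqP; rewrite eq_le ge_max le_max lexx.
Qed.

End Bilip.

Section Lattice.
Variables (R : realType) (d : nat).
Notation vec := 'rV[R]_d.

Lemma vec_neq (a b : vec) : a != b -> exists i, a ord0 i != b ord0 i.
Proof.
move=> ab; case: (pselect (exists i, a ord0 i != b ord0 i)) => // hn; exfalso.
move/eqP: ab; apply; apply/rowP => i; apply/eqP; apply/negPn/negP => hne.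
apply: hn; exists i; exact: hne.
Qed.

Lemma Zd_sep : separated 1 (@Zd R d).
Proof.
move=> a b Za Zb /vec_neq [i hi]; apply: le_trans (enorm_coord _ i).
rewrite !mxE norm_intr_ge1 //; first by apply: rpredB; [exact: Za|exact: Zb].
by rewrite subr_eq0.
Qed.

Definition zfl (s : R) (x : vec) : vec := \row_i (Num.floor (x ord0 i / s))%:~R.

Lemma zfl_Zd s x : @Zd R d (zfl s x).
Proof. by move=> i; rewrite mxE intr_int. Qed.

Lemma zfl_close s x : 0 < s -> enorm (x - s *: zfl s x) <= d%:R * s.
Proof.
move=> s0; apply: enorm_le_coord; first exact: ltW.
move=> i; rewrite !mxE.
have := floor_itv (x ord0 i / s); rewrite intrD => /andP [h1 h2].
set t := x ord0 i / s in h1 h2.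
set u := (Num.floor t)%:~R in h1 h2 *.
have -> : x ord0 i - s * u = s * (t - u) by rewrite /t mulrBr [s * (_ / s)]mulrC divfK // gt_eqF.
rewrite normrM gtr0_norm // ger0_norm ?subr_ge0 //.
have : t - u <= 1 by rewrite lerBlDl ltW.
nra.
Qed.

Lemma Zd_net : is_net (d%:R + 1) (@Zd R d).
Proof.
move=> x; exists (zfl 1 x); first exact: zfl_Zd.
have := zfl_close x ltr01; rewrite scale1r mulr1 => h.
by apply: le_trans h _; rewrite lerDl.
Qed.

Lemma Zd_separated_net : separated_net (@Zd R d).
Proof.
exists 1, (d%:R + 1); split; [exact: ltr01| |exact: Zd_sep|exact: Zd_net].
have : (0:R) <= d%:R := ler0n _ _; lra.
Qed.

Lemma enorm_delta (i : 'I_d) : enorm (delta_mx ord0 i : vec) = 1.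
Proof.
rewrite /enorm (bigD1 i) //= big1 ?addr0 ?mxE ?eqxx ?expr1n ?sqrtr1 //.
by move=> j ji; rewrite mxE (negbTE ji) andbF expr0n.
Qed.

Lemma delta_Zd (i : 'I_d) : @Zd R d (delta_mx ord0 i).
Proof. by move=> j; rewrite mxE; case: (_ && _); rewrite ?rpred0 ?rpred1. Qed.

Lemma delta_neq0 (i : 'I_d) : (0 : vec) != delta_mx ord0 i.
Proof.
apply/negP => /eqP /(congr1 (@enorm R d)); rewrite enorm_delta enorm0 => /eqP.
by rewrite eq_sym oner_eq0.
Qed.

Lemma Zd0 : @Zd R d 0.
Proof. by move=> i; rewrite mxE rpred0. Qed.

End Lattice.

Section Arith.
Variable R : realFieldType.
Implicit Types a b c u P X r rho ex ey D p q : R.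
Lemma ar_a P rho X : rho * P <= X -> P * (rho / 4) <= X / 4. Proof. lra. Qed.
Lemma ar_b1 rho ex ey X : ex - ey <= X -> - X <= rho - ex - (rho - ey). Proof. lra. Qed.
Lemma ar_b2 rho ex ey X : ey - ex <= X -> rho - ex - (rho - ey) <= X. Proof. lra. Qed.
Lemma ar_c rho ex ey X : rho <= ex -> ex - ey <= X -> rho - ey <= X. Proof. lra. Qed.
Lemma ar_d p q rho X : rho * p + rho * q <= X -> p * (rho / 4) + q * (rho / 4) <= X / 4. Proof. lra. Qed.
Lemma ar_e a b c X : b <= X + c -> a + b <= a + X + c. Proof. lra. Qed.
Lemma ar_f r ex ey D X : r <= D -> D <= ex + X + ey -> r / 2 - ex + (r / 2 - ey) <= X. Proof. lra. Qed.
Lemma ar_g a b : a < b -> b <= a -> False. Proof. lra. Qed.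
Lemma ar_h rho u X ey : rho <= u -> u <= X + ey -> 0 + (rho - ey) <= X. Proof. lra. Qed.
Lemma ar_i rho u X ex : rho <= u -> u <= X + ex -> rho - ex + 0 <= X. Proof. lra. Qed.
End Arith.

Section Arith2.
Variable R : realFieldType.

Lemma ar_j (t M X : R) : 0 <= X -> t <= M -> 1 <= M * t -> t * X <= M * X /\ X <= M * (t * X).
Proof.
move=> X0 h1 h2; split; first by rewrite ler_wpM2r.
rewrite mulrA -{1}(mul1r X); exact: ler_wpM2r.
Qed.

Lemma ar_k (L t D r : R) : 1 <= L -> 0 < t -> 0 < r -> r / 8 <= D -> L * t * D = r / 4 -> t <= 2.
Proof.
move=> L1 t0 r0 hD e.
have tD0 : 0 <= t * D by apply: mulr_ge0; [exact: ltW| lra].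
have h1 : t * D <= r / 4.
  rewrite -e -mulrA -{1}(mul1r (t * D)); exact: ler_wpM2r.
have h2 : t * (r / 8) <= t * D by apply: ler_wpM2l; [exact: ltW|].
have h3 : t * (r / 8) <= r / 4 by apply: le_trans h2 h1.
have : t * r <= 2 * r by lra.
by rewrite ler_pM2r.
Qed.

Lemma ar_m (u D r w dd : R) : 0 < D -> 1 <= dd -> 0 <= w -> 0 < r -> u * D = r / 4 ->
  D = w * r + r / 8 -> 1 <= 10 * dd * (2 * w + 5 / 4) * u.
Proof.
move=> D0 d1 w0 r0 e De.
have u0 : 0 < u.
  have : 0 < u * D by rewrite e; lra.
  by rewrite pmulr_lgt0.
have hw : 0 <= w * r by apply: mulr_ge0 => //; exact: ltW.
have k : D <= 10 * (2 * w + 5 / 4) * (u * D).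
  rewrite e De; have : 0 <= w * r by []; lra.
have k2 : 10 * (2 * w + 5 / 4) * (u * D) <= 10 * dd * (2 * w + 5 / 4) * u * D.
  have -> : 10 * dd * (2 * w + 5 / 4) * u * D = dd * (10 * (2 * w + 5 / 4) * (u * D)) by ring.
  rewrite -{1}(mul1r (10 * _ * _)); apply: ler_wpM2r => //.
  apply: mulr_ge0; last by apply: mulr_ge0; [exact: ltW|exact: ltW].
  lra.
have := le_trans k k2.
by rewrite -{1}(mul1r D) ler_pM2r.
Qed.

Lemma ar_l (L dd w : R) : 1 <= L -> 1 <= dd -> 0 <= w -> 2 <= 10 * L * dd * (2 * w + 5 / 4).
Proof.
move=> L1 d1 w0.
have h1 : 1 <= L * dd by rewrite -(mul1r 1) ler_pM //.
have h2 : 5 / 4 <= 2 * w + 5 / 4 by lra.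
have h3 : 1 * (5 / 4) <= L * dd * (2 * w + 5 / 4) by apply: ler_pM => //; lra.
have -> : 10 * L * dd * (2 * w + 5 / 4) = 10 * (L * dd * (2 * w + 5 / 4)) by ring.
lra.
Qed.

Lemma ar_main (L dd r Rn Dd t X Y P Q e1 e2 ea eb s : R) :
  1 <= L -> 1 <= dd -> 0 < r -> 0 < Rn -> Dd = Rn + r / 8 -> L * t * Dd = r / 4 -> 0 < t ->
  0 <= e1 -> e1 <= Dd -> 0 <= e2 -> e2 <= Dd -> 0 <= ea -> ea <= r / 8 -> 0 <= eb -> eb <= r / 8 ->
  Y <= P + t * e1 + t * e2 -> P <= Y + t * e1 + t * e2 -> P <= L * Q -> Q <= L * P -> r <= Q ->
  X <= e1 + ea + Q + eb + e2 -> Q <= ea + e1 + X + e2 + eb -> s <= X -> s * (8 * dd) = r ->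
  Y <= 10 * L * dd * (2 * (Rn / r) + 5 / 4) * X /\ X <= 10 * L * dd * (2 * (Rn / r) + 5 / 4) * Y.
Proof.
move=> L1 d1 r0 Rn0 De e t0 he1 he1' he2 he2' hea hea' heb heb' hY hP hPQ hQP hrQ hX hQ hs hsr.
have [w wE] : exists w, Rn / r = w by eexists.
rewrite wE.
have Rw : Rn = w * r by rewrite -wE divfK // gt_eqF.
have w0 : 0 <= w by rewrite -wE divr_ge0 // ltW.
have L0 : 0 < L by lra.
have tDd : t * Dd <= r / 4.
  have tD0 : 0 <= t * Dd by apply: mulr_ge0; [exact: ltW|lra].
  rewrite -e -mulrA -{1}(mul1r (t * Dd)); exact: ler_wpM2r.
have te : t * e1 + t * e2 <= 2 * (t * Dd).
  have : t * e1 <= t * Dd by apply: ler_wpM2l => //; exact: ltW.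
  have : t * e2 <= t * Dd by apply: ler_wpM2l => //; exact: ltW.
  lra.
have Lte : L * (t * e1 + t * e2) <= r / 2.
  have : L * (t * e1 + t * e2) <= L * (2 * (t * Dd)) by apply: ler_wpM2l => //; exact: ltW.
  have hh : L * (2 * (t * Dd)) = 2 * (L * t * Dd) by ring.
  rewrite e in hh.
  lra.
have s0 : 0 < s.
  have : 0 < s * (8 * dd) by rewrite hsr.
  rewrite pmulr_lgt0 //; lra.
have X0 : 0 <= X by lra.
have Y0 : 0 <= Y.
  have : 0 <= t * e1 + t * e2 by apply: addr_ge0; apply: mulr_ge0 => //; exact: ltW.
  have : r <= L * P by lra.
  have : L * P <= L * (Y + t * e1 + t * e2) by apply: ler_wpM2l => //; exact: ltW.
  have : L * (Y + t * e1 + t * e2) = L * Y + L * (t * e1 + t * e2) by ring.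
  move=> h1 h2 h3 h4.
  have : 0 <= L * Y by lra.
  by rewrite pmulr_rge0.
have wr : 0 <= w * r by apply: mulr_ge0 => //; exact: ltW.
split.
  have u1 : Y <= L * Q + r / 2 by lra.
  have u2 : Q <= X + 2 * (w * r) + r / 2 by lra.
  have u3 : L * Q <= L * (X + 2 * (w * r) + r / 2) by apply: ler_wpM2l => //; exact: ltW.
  have u4 : r <= 8 * dd * X.
    have : s * (8 * dd) <= X * (8 * dd) by apply: ler_wpM2r => //; lra.
    lra.
  have u5 : (2 * w + 1) * r <= (2 * w + 1) * (8 * dd * X) by apply: ler_wpM2l => //; lra.
  have u6 : L * ((2 * w + 1) * r) <= L * ((2 * w + 1) * (8 * dd * X)) by apply: ler_wpM2l => //; exact: ltW.
  have u7 : r / 2 <= L * (r / 2) by rewrite -{1}(mul1r (r / 2)); apply: ler_wpM2r => //; lra.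
  have u8 : 0 <= L * X * (dd * (4 * w + 9 / 2) - 1).
    apply: mulr_ge0; first by apply: mulr_ge0 => //; exact: ltW.
    have : 1 * 1 <= dd * (4 * w + 9 / 2) by apply: ler_pM => //; lra.
    lra.
  have : Y <= L * X + L * ((2 * w + 1) * (8 * dd * X)).
    have : L * (X + 2 * (w * r) + r / 2) + r / 2 <= L * X + L * ((2 * w + 1) * r).
      have E1 : L * (X + 2 * (w * r) + r / 2) = L * X + L * (2 * (w * r)) + L * (r / 2) by ring.
      have E2 : L * ((2 * w + 1) * r) = L * (2 * (w * r)) + L * (r / 2) + L * (r / 2).
        lra.
      lra.
    lra.
  have -> : 10 * L * dd * (2 * w + 5 / 4) * X = L * X + L * ((2 * w + 1) * (8 * dd * X)) + (L * X * (dd * (4 * w + 9 / 2) - 1)) by lra.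
  lra.
have l1 : Q - r / 2 <= L * Y.
  have : Q <= L * P by [].
  have : L * P <= L * (Y + t * e1 + t * e2) by apply: ler_wpM2l => //; exact: ltW.
  have : L * (Y + t * e1 + t * e2) = L * Y + L * (t * e1 + t * e2) by ring.
  lra.
have l2 : Q <= 2 * (L * Y) by lra.
have l3 : w * r <= w * Q by apply: ler_wpM2l.
have l4 : X <= Q * (2 * w + 3 / 2).
  have : X <= Q + 2 * (w * r) + r / 2 by lra.
  have -> : Q * (2 * w + 3 / 2) = Q + 2 * (w * Q) + Q / 2 by lra.
  lra.
have l5 : Q * (2 * w + 3 / 2) <= 2 * (L * Y) * (2 * w + 3 / 2) by apply: ler_wpM2r => //; lra.
have l6 : 0 <= L * Y * (dd * (20 * w + 25 / 2) - (4 * w + 3)).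
  apply: mulr_ge0; first by apply: mulr_ge0 => //; exact: ltW.
  have : 1 * (20 * w + 25 / 2) <= dd * (20 * w + 25 / 2) by apply: ler_wpM2r => //; lra.
  lra.
have -> : 10 * L * dd * (2 * w + 5 / 4) * Y = 2 * (L * Y) * (2 * w + 3 / 2) + L * Y * (dd * (20 * w + 25 / 2) - (4 * w + 3)) by lra.
lra.
Qed.

End Arith2.

Section Arith3.
Variable R : realFieldType.
Lemma ar_n (s E Y M : R) : 0 < s -> Y <= M * (s * E) -> s * E <= M * Y ->
  s^-1 * Y <= M * E /\ E <= M * (s^-1 * Y).
Proof.
move=> s0 h1 h2; split.
  rewrite -(ler_pM2l s0) mulVKf ?gt_eqF // mulrCA; exact: h1.
rewrite -(ler_pM2l s0) mulrCA mulVKf ?gt_eqF //; exact: h2.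
Qed.
End Arith3.

Section Construct.
Variables (R : realType) (d : nat).
Notation vec := 'rV[R]_d.
Variables (A : set vec) (r Rn L : R) (f : vec -> vec) (a0 : vec).
Hypotheses (d1 : (0 < d)%N) (r0 : 0 < r) (Rn0 : 0 < Rn) (L1 : 1 <= L)
  (sepA : separated r A) (netA : is_net Rn A) (fL : L_bilip_on L A f) (Aa0 : A a0).

Definition rho := r / 2.
Definition sc := r / (8 * d%:R).
Fact pp_key : unit. Proof. exact: tt. Qed.
Definition pp := locked_with pp_key (fun a : vec => sc *: zfl sc a).
Lemma ppE a : pp a = sc *: zfl sc a. Proof. by rewrite /pp; case: pp_key. Qed.
Fact cc_key : unit. Proof. exact: tt. Qed.
Definition cc := locked_with cc_key (fun x : vec => xget a0 (fun a => A a /\ enorm (x - a) < rho)).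
Lemma ccE x : cc x = xget a0 (fun a => A a /\ enorm (x - a) < rho). Proof. by rewrite /cc; case: cc_key. Qed.
Fact phi_key : unit. Proof. exact: tt. Qed.
Definition phi := locked_with phi_key (fun x : vec => Num.max 0 (1 - enorm (x - cc x) / rho)).
Lemma phiE x : phi x = Num.max 0 (1 - enorm (x - cc x) / rho). Proof. by rewrite /phi; case: phi_key. Qed.
Definition hh (x : vec) : vec := x + phi x *: (pp (cc x) - cc x).

Lemma dR1 : (1 : R) <= d%:R.
Proof. by rewrite ler1n. Qed.

Lemma sc_gt0 : 0 < sc.
Proof. by rewrite /sc divr_gt0 // mulr_gt0 // ltr0n. Qed.

Lemma rho_gt0 : 0 < rho.
Proof. rewrite /rho. have := r0. lra. Qed.

Lemma pp_close a : enorm (a - pp a) <= r / 8.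
Proof.
rewrite ppE; apply: le_trans (zfl_close a sc_gt0) _.
have dn0 : (d%:R : R) != 0 by rewrite pnatr_eq0 -lt0n.
by rewrite /sc [8 * _]mulrC invfM mulrCA mulVKf.
Qed.

Lemma sepA' a b : A a -> A b -> a != b -> r <= enorm (a - b).
Proof. exact: sepA. Qed.

Lemma cc_prop x : A (cc x) /\ (enorm (x - cc x) < rho \/ forall a, A a -> rho <= enorm (x - a)).
Proof.
case: (pselect (exists a, A a /\ enorm (x - a) < rho)) => [ex|nex].
  by have [] := xgetPex a0 ex; rewrite -ccE; split => //; left.
have -> : cc x = a0.
  by rewrite ccE xgetPN // => a ha; apply: nex; exists a.
split=> //; right => a Aa; rewrite leNgt; apply/negP => h; apply: nex; by exists a.
Qed.

Lemma cc_self a : A a -> cc a = a.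
Proof.
move=> Aa.
have [Ac h] : A (cc a) /\ enorm (a - cc a) < rho.
  rewrite ccE; apply: (@xgetI _ a0 (fun b => A b /\ enorm (a - b) < rho) a).
  by rewrite subrr enorm0 rho_gt0.
apply/eqP; apply/negPn/negP => ne.
have := sepA' Aa Ac; rewrite eq_sym ne => /(_ isT) h2.
have := rho_gt0; rewrite /rho in h *; have := r0; lra.
Qed.

Definition gg (x : vec) : vec := phi x *: (pp (cc x) - cc x).

Lemma v_bound a : enorm (pp a - a) <= rho / 4.
Proof. rewrite enormB; apply: le_trans (pp_close a) _; rewrite /rho; have := r0; lra. Qed.

Lemma phi_cases x : (enorm (x - cc x) < rho /\ rho * phi x = rho - enorm (x - cc x))
   \/ (rho <= enorm (x - cc x) /\ phi x = 0).
Proof.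
have rp := rho_gt0; rewrite phiE.
set e := enorm (x - cc x).
have [lt|ge] := ltP e rho.
  left; split => //.
  have -> : Num.max 0 (1 - e / rho) = 1 - e / rho.
    apply/max_idPr; rewrite subr_ge0 ler_pdivrMr // mul1r; exact: ltW.
  by rewrite mulrBr mulr1 mulrCA divff ?mulr1 // gt_eqF.
right; split => //; apply/max_idPl; rewrite subr_le0 ler_pdivlMr // mul1r; exact: ge.
Qed.

Lemma phi_ge0 x : 0 <= phi x.
Proof. by rewrite phiE le_max lexx. Qed.


Lemma enormB_le (u w : vec) : enorm (u - w) <= enorm u + enorm w.
Proof. by rewrite -(enormN w); apply: enormD. Qed.

Lemma gg_lip x y : enorm (gg x - gg y) <= enorm (x - y) / 4.
Proof.
have rp := rho_gt0; have hr := r0.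
set X := enorm (x - y).
have X0 : 0 <= X by apply: enorm_ge0.
have [Acx cx] := cc_prop x; have [Acy cy] := cc_prop y.
have [eab|nab] := eqVneq (cc x) (cc y).
  rewrite /gg eab -scalerBl enormZ.
  have hv := v_bound (cc y).
  suff hP : rho * `|phi x - phi y| <= X.
    apply: le_trans (ler_wpM2l (normr_ge0 _) hv) _; exact: ar_a.
  have e1 := enorm_rev x y (cc y); have e2 := enorm_rev y x (cc y).
  rewrite (enormB y x) -/X in e2; rewrite -/X in e1; rewrite -eab in e1 e2.
  have := phi_cases x; have := phi_cases y; rewrite -eab.
  move=> [[h1 h2]|[h1 h2]] [[h3 h4]|[h3 h4]].
  - have -> : rho * `|phi x - phi y| = `|rho * phi x - rho * phi y| by rewrite -mulrBr normrM gtr0_norm.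
    rewrite h2 h4; rewrite ler_norml; apply/andP; split; [exact: ar_b1 | exact: ar_b2].
  - rewrite h4 sub0r normrN ger0_norm ?phi_ge0 // h2; exact: ar_c h3 e1.
  - rewrite h2 subr0 ger0_norm ?phi_ge0 // h4; exact: ar_c h1 e2.
  - by rewrite h2 h4 subrr normr0 mulr0.
apply: le_trans (enormB_le _ _) _.
rewrite /gg !enormZ !ger0_norm ?phi_ge0 //.
have hva := v_bound (cc x); have hvb := v_bound (cc y).
have px := phi_ge0 x; have py := phi_ge0 y.
suff hP : rho * phi x + rho * phi y <= X.
  apply: le_trans (lerD (ler_wpM2l px hva) (ler_wpM2l py hvb)) _; exact: ar_d.
have hab := sepA' Acx Acy nab.
have t1 : enorm (cc x - cc y) <= enorm (x - cc x) + X + enorm (y - cc y).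
  apply: le_trans (enorm_tri (cc x) x (cc y)) _.
  rewrite (enormB (cc x) x); have := enorm_tri x y (cc y); rewrite -/X.
  exact: ar_e.
have := phi_cases x; have := phi_cases y.
move=> [[h1 h2]|[h1 h2]] [[h3 h4]|[h3 h4]].
- rewrite h2 h4 /rho; exact: ar_f hab t1.
- rewrite h4 h2 mulr0.
  case: cx => [cx|cx]; first by exfalso; exact: ar_g cx h3.
  exact: ar_h (cx _ Acy) (enorm_tri x y (cc y)).
- rewrite h4 h2 mulr0.
  case: cy => [cy|cy]; first by exfalso; exact: ar_g cy h1.
  have := enorm_tri y x (cc x); rewrite (enormB y x) -/X => t.
  exact: ar_i (cy _ Acx) t.
- by rewrite h2 h4 mulr0 addr0.
Qed.

Lemma hh_gg x : hh x = x + gg x.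
Proof. by []. Qed.

Lemma hh_bounds x y : 3 / 4 * enorm (x - y) <= enorm (hh x - hh y) /\
  enorm (hh x - hh y) <= 5 / 4 * enorm (x - y).
Proof.
have e : hh x - hh y = (x - y) + (gg x - gg y).
  by apply/rowP => i; rewrite /hh !mxE; ring.
have g := gg_lip x y.
split.
  have e2 : x - y = (hh x - hh y) - (gg x - gg y).
    by rewrite e addrK.
  have := enormB_le (hh x - hh y) (gg x - gg y); rewrite -e2; lra.
rewrite e; have := enormD (x - y) (gg x - gg y); lra.
Qed.

Lemma hh_A a : A a -> hh a = pp a.
Proof.
move=> Aa; rewrite /hh phiE cc_self // subrr enorm0 mul0r subr0.
have -> : Num.max 0 1 = (1 : R) by apply/max_idPr; exact: ler01.
by rewrite scale1r addrC subrK.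
Qed.

Definition DD := Rn + r / 8.
Fact qq_key : unit. Proof. exact: tt. Qed.
Definition qq := locked_with qq_key (fun x : vec => xget a0 (fun a => A a /\
   (pp a = x \/ ((forall b, A b -> pp b != x) /\ enorm (x - a) <= Rn)))).
Lemma qqE x : qq x = xget a0 (fun a => A a /\
   (pp a = x \/ ((forall b, A b -> pp b != x) /\ enorm (x - a) <= Rn))).
Proof. by rewrite /qq; case: qq_key. Qed.

Lemma pp_sep a b : A a -> A b -> a != b -> 3 * r / 4 <= enorm (pp a - pp b).
Proof.
move=> Aa Ab ab; have h := sepA' Aa Ab ab.
have h1 := pp_close a; have h2 := pp_close b.
have t1 := enorm_tri a (pp a) b; have t2 := enorm_tri (pp a) (pp b) b.
rewrite (enormB (pp b) b) in t2; lra.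
Qed.

Lemma qq_prop x : A (qq x) /\ enorm (x - pp (qq x)) <= DD.
Proof.
have ex : exists a, A a /\ (pp a = x \/ ((forall b, A b -> pp b != x) /\ enorm (x - a) <= Rn)).
  case: (pselect (exists a, A a /\ pp a = x)) => [[a [Aa e]]|ne].
    by exists a; split => //; left.
  have [a Aa ha] := netA x; exists a; split => //; right; split => // b Ab.
  by apply/eqP => e; apply: ne; exists b.
have [Aq hq] := xgetPex a0 ex; rewrite -qqE in Aq hq.
split => //; have hr := r0; have hR := Rn0; case: hq => [->|[_ hq]].
  by rewrite subrr enorm0 /DD; lra.
have := enorm_tri x (qq x) (pp (qq x)); have := pp_close (qq x); rewrite /DD; lra.
Qed.

Lemma qq_pp a : A a -> qq (pp a) = a.
Proof.
move=> Aa.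
have [Aq hq] := @xgetI _ a0 (fun b => A b /\ (pp b = pp a \/ ((forall c, A c -> pp c != pp a) /\ enorm (pp a - b) <= Rn))) a (conj Aa (or_introl erefl)).
rewrite -qqE in Aq hq.
case: hq => [e|[h _]]; last by have := h a Aa; rewrite eqxx.
apply/eqP; apply/negPn/negP => ne; have := pp_sep Aq Aa ne; rewrite e subrr enorm0.
have := r0; lra.
Qed.

Definition delta := r / (4 * L * DD).
Definition FF (x : vec) : vec := f (qq x) + delta *: (x - pp (qq x)).
Definition MM := 10 * L * d%:R * (2 * (Rn / r) + 5 / 4).

Lemma DD_gt0 : 0 < DD.
Proof. rewrite /DD; have := r0; have := Rn0; lra. Qed.

Lemma delta_gt0 : 0 < delta.
Proof. rewrite /delta divr_gt0 // !mulr_gt0 ?DD_gt0 //; have := L1; lra. Qed.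

Lemma delta_eq : L * delta * DD = r / 4.
Proof.
have hD := DD_gt0.
have h0 : 4 * L * DD != 0 by rewrite gt_eqF // !mulr_gt0 //; have := L1; lra.
have h : r / (4 * L * DD) * (4 * L * DD) = r by rewrite divfK.
rewrite -/delta in h; lra.
Qed.

Lemma sc_eq : sc * (8 * d%:R) = r.
Proof. by rewrite /sc divfK // gt_eqF // mulr_gt0 // ltr0n. Qed.

Lemma Rn_r_ge0 : 0 <= Rn / r.
Proof. by rewrite divr_ge0 // ltW. Qed.

Lemma FF_bounds x y : sc <= enorm (x - y) ->
  enorm (FF x - FF y) <= MM * enorm (x - y) /\ enorm (x - y) <= MM * enorm (FF x - FF y).
Proof.
move=> hs.
have [Aa ea] := qq_prop x; have [Ab eb] := qq_prop y.
have [eab|nab] := eqVneq (qq x) (qq y).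
  have e : FF x - FF y = delta *: (x - y).
    by rewrite /FF eab; apply/rowP => i; rewrite !mxE; ring.
  rewrite e enormZ gtr0_norm ?delta_gt0 //; apply: ar_j; first exact: enorm_ge0.
    apply: le_trans (ar_k L1 delta_gt0 r0 _ delta_eq) _.
      rewrite /DD; have := Rn0; lra.
    exact: (ar_l L1 dR1 Rn_r_ge0).
  have -> : MM * delta = 10 * d%:R * (2 * (Rn / r) + 5 / 4) * (L * delta) by rewrite /MM; ring.
  apply: (ar_m DD_gt0 dR1 Rn_r_ge0 r0) => //.
    by rewrite -delta_eq.
  by rewrite /DD mulrC divfK // gt_eqF.
set a := qq x in Aa ea nab *; set b := qq y in Ab eb nab *.
have e : FF x - FF y = (f a - f b) + (delta *: (x - pp a) - delta *: (y - pp b)).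
  by rewrite /FF -/a -/b; apply/rowP => i; rewrite !mxE; ring.
have hY : enorm (FF x - FF y) <= enorm (f a - f b) + delta * enorm (x - pp a) + delta * enorm (y - pp b).
  rewrite e; apply: le_trans (enormD _ _) _.
  have T : enorm (delta *: (x - pp a) - delta *: (y - pp b)) <= delta * enorm (x - pp a) + delta * enorm (y - pp b).
    apply: le_trans (enormB_le _ _) _; rewrite !enormZ gtr0_norm ?delta_gt0 //.
  lra.
have hP : enorm (f a - f b) <= enorm (FF x - FF y) + delta * enorm (x - pp a) + delta * enorm (y - pp b).
  have e2 : f a - f b = (FF x - FF y) - (delta *: (x - pp a) - delta *: (y - pp b)) by rewrite e addrK.
  rewrite e2; apply: le_trans (enormB_le _ _) _.
  have T : enorm (delta *: (x - pp a) - delta *: (y - pp b)) <= delta * enorm (x - pp a) + delta * enorm (y - pp b).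
    apply: le_trans (enormB_le _ _) _; rewrite !enormZ gtr0_norm ?delta_gt0 //.
  lra.
have [hPQ hQP] := proj2 fL b a Ab Aa.
have hrQ := sepA' Aa Ab nab.
have ca := pp_close a; have cb := pp_close b.
have hX : enorm (x - y) <= enorm (x - pp a) + enorm (a - pp a) + enorm (a - b) + enorm (b - pp b) + enorm (y - pp b).
  have t1 := enorm_tri x (pp a) y; have t2 := enorm_tri (pp a) a y.
  have t3 := enorm_tri a b y; have t4 := enorm_tri b (pp b) y.
  rewrite (enormB (pp a) a) in t2; rewrite (enormB (pp b) y) in t4; lra.
have hQ : enorm (a - b) <= enorm (a - pp a) + enorm (x - pp a) + enorm (x - y) + enorm (y - pp b) + enorm (b - pp b).
  have t1 := enorm_tri a (pp a) b; have t2 := enorm_tri (pp a) x b.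
  have t3 := enorm_tri x y b; have t4 := enorm_tri y (pp b) b.
  rewrite (enormB (pp a) x) in t2; rewrite (enormB (pp b) b) in t4; lra.
exact: (ar_main L1 dR1 r0 Rn0 erefl delta_eq delta_gt0 (enorm_ge0 _) ea (enorm_ge0 _) eb
  (enorm_ge0 _) ca (enorm_ge0 _) cb hY hP hPQ hQP hrQ hX hQ hs sc_eq).
Qed.

Definition f2 (z : vec) : vec := sc^-1 *: FF (sc *: z).

Lemma f2_bilip : L_bilip_on MM (@Zd R d) f2.
Proof.
have s0 := sc_gt0.
suff hb : forall z w, Zd z -> Zd w -> enorm (f2 w - f2 z) <= MM * enorm (w - z) /\ enorm (w - z) <= MM * enorm (f2 w - f2 z).
  split; last exact: hb.
  move=> z w; rewrite !in_setE => Zz Zw e.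
  have [_] := hb z w Zz Zw; rewrite e subrr enorm0 mulr0 => h.
  by apply/eqP; rewrite eq_sym -subr_eq0; apply/eqP; apply: enorm_eq0; apply/eqP; rewrite eq_le h enorm_ge0.
move=> z w Zz Zw.
have [->|ne] := eqVneq z w.
  by rewrite !subrr enorm0 mulr0 lexx.
have h1 : 1 <= enorm (w - z) by apply: Zd_sep => //; rewrite eq_sym.
have ew : sc *: w - sc *: z = sc *: (w - z) by rewrite scalerBr.
have hs : sc <= enorm (sc *: w - sc *: z).
  by rewrite ew enormZ gtr0_norm // ler_pMr.
have [b1 b2] := FF_bounds hs.
rewrite ew enormZ gtr0_norm // in b1 b2.
have -> : f2 w - f2 z = sc^-1 *: (FF (sc *: w) - FF (sc *: z)) by rewrite /f2 scalerBr.
rewrite enormZ gtr0_norm ?invr_gt0 //.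
exact: ar_n.
Qed.

Lemma f2_ext a : A a -> hh a = sc *: zfl sc a /\ sc *: f2 (zfl sc a) = f a.
Proof.
move=> Aa; rewrite hh_A // ppE; split => //.
rewrite /f2 scalerA divff ?gt_eqF ?sc_gt0 // scale1r /FF -ppE qq_pp // subrr scaler0 addr0.
done.
Qed.

Lemma construct_all : exists (s : R) (h g : vec -> vec), [/\ 0 < s,
  (forall x y, 3 / 4 * enorm (x - y) <= enorm (h x - h y) /\ enorm (h x - h y) <= 5 / 4 * enorm (x - y)),
  L_bilip_on (10 * L * d%:R * (2 * (Rn / r) + 5 / 4)) (@Zd R d) g &
  forall a, A a -> h a = s *: zfl s a /\ s *: g (zfl s a) = f a].
Proof.
have _ := (d1, r0, Rn0, L1, sepA, netA, fL, Aa0).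
exists sc, hh, f2; split.
- exact: sc_gt0.
- exact: hh_bounds.
- exact: f2_bilip.
- exact: f2_ext.
Qed.

End Construct.


Section ArithT.
Variable R : realFieldType.
Lemma ar_T (L dd r Rn K sq : R) : 1 <= L -> 1 <= dd -> 0 < r -> r / 2 <= Rn -> 16 <= K ->
  16 * (3 * dd / r) <= K -> 1 <= sq ->
  10 * L * dd * (2 * (Rn / r) + 5 / 4) <= 24 * sq * Rn ^+ 2 * K ^+ 3 * L.
Proof.
move=> L1 d1 r0 hR K16 Kd s1.
have [w wE] : exists w, Rn / r = w by eexists.
rewrite wE.
have Rw : Rn = w * r by rewrite -wE divfK // gt_eqF.
have w2 : 1 / 2 <= w.
  rewrite -wE ler_pdivlMr //; lra.
have Kr : 48 * dd <= K * r.
  have : 16 * (3 * dd / r) * r <= K * r by rewrite ler_pM2r.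
  rewrite mulrA divfK ?gt_eqF //; lra.
have Kr3 : 3 * dd <= K * r by lra.
have KRn : w * (3 * dd) <= K * Rn.
  have -> : K * Rn = w * (K * r) by rewrite Rw; ring.
  apply: ler_wpM2l => //; lra.
have h0 : 0 <= w * (3 * dd) by apply: mulr_ge0; lra.
have KRn2 : (w * (3 * dd)) ^+ 2 <= (K * Rn) ^+ 2.
  by rewrite lerXn2r // ?nnegrE //; apply: le_trans KRn.
have K3 : 16 * (w * (3 * dd)) ^+ 2 <= K * (K * Rn) ^+ 2.
  apply: ler_pM; [lra|exact: sqr_ge0|exact: K16|exact: KRn2].
have e1 : K * (K * Rn) ^+ 2 = Rn ^+ 2 * K ^+ 3.
  by rewrite exprMn !expr2 (exprS K 2) expr2; ring.
rewrite e1 in K3.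
have L0 : 0 <= L by lra.
have w0 : 0 <= w by lra.
set W := w ^+ 2; set D2 := dd ^+ 2.
have eW : (w * (3 * dd)) ^+ 2 = 9 * (W * D2) by rewrite /W /D2 !expr2; ring.
rewrite eW in K3.
have a1 : 2 * w + 5 / 4 <= 9 * W.
  have : 0 <= (w - 1 / 2) * (w + 1 / 2) by apply: mulr_ge0; lra.
  have : 0 <= w * (w - 1 / 2) by apply: mulr_ge0; lra.
  rewrite /W expr2; lra.
have a2 : dd <= D2 by rewrite /D2 expr2 ler_peMl //; lra.
have W0 : 0 <= W by exact: sqr_ge0.
have D0 : 0 <= D2 by exact: sqr_ge0.
have b1 : L * dd * (2 * w + 5 / 4) <= L * dd * (9 * W) by apply: ler_wpM2l => //; apply: mulr_ge0; lra.
have b2 : L * dd * (9 * W) <= L * D2 * (9 * W).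
  apply: ler_wpM2r; first lra. by apply: ler_wpM2l.
have WD0 : 0 <= W * D2 by apply: mulr_ge0.
have b3 : L * (W * D2) <= (sq * L) * (W * D2).
  apply: ler_wpM2r => //; rewrite -{1}(mul1r L); apply: ler_wpM2r => //.
have b4 : sq * L * (16 * (9 * (W * D2))) <= sq * L * (Rn ^+ 2 * K ^+ 3).
  apply: ler_wpM2l; first by apply: mulr_ge0; lra.
  lra.
have -> : 24 * sq * Rn ^+ 2 * K ^+ 3 * L = 24 * (sq * L * (Rn ^+ 2 * K ^+ 3)) by ring.
have e3 : L * D2 * (9 * W) = 9 * (L * (W * D2)) by ring.
have e4 : sq * L * (16 * (9 * (W * D2))) = 144 * (sq * L * (W * D2)) by ring.
have Z0 : 0 <= sq * L * (W * D2) by apply: mulr_ge0 => //; apply: mulr_ge0; lra.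
have e5 : 10 * L * dd * (2 * w + 5 / 4) = 10 * (L * dd * (2 * w + 5 / 4)) by ring.
lra.
Qed.
End ArithT.

Section Final.
Variables (R : realType) (d : nat).
Notation vec := 'rV[R]_d.

Lemma bilip_mono (L1 L2 : R) (A : set vec) f : L1 <= L2 -> L_bilip_on L1 A f -> L_bilip_on L2 A f.
Proof.
move=> le [inj h]; split=> // x y Ax Ay; have [h1 h2] := h x y Ax Ay.
split; [apply: le_trans h1 _| apply: le_trans h2 _]; apply: ler_wpM2r => //; exact: enorm_ge0.
Qed.

Lemma bilip_pw (M : R) (A : set vec) f :
  (forall x y, A x -> A y -> enorm (f y - f x) <= M * enorm (y - x) /\
     enorm (y - x) <= M * enorm (f y - f x)) -> L_bilip_on M A f.
Proof.
move=> h; split => // x y; rewrite !in_setE => Ax Ay e.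
have [_] := h x y Ax Ay; rewrite e subrr enorm0 mulr0 => h2.
have : enorm (y - x) = 0 by apply/eqP; rewrite eq_le h2 enorm_ge0.
by move/enorm_eq0/eqP; rewrite subr_eq0 => /eqP.
Qed.

Lemma ar_o (s M X H Gd : R) : 0 < s -> 0 <= M -> 0 <= X -> Gd <= M * (s^-1 * H) -> s^-1 * H <= M * Gd ->
  3 / 4 * X <= H -> H <= 5 / 4 * X -> s * Gd <= 4 / 3 * M * X /\ X <= 4 / 3 * M * (s * Gd).
Proof.
move=> s0 M0 X0 h1 h2 h3 h4.
have e1 : s * (M * (s^-1 * H)) = M * H by rewrite mulrCA mulVKf ?gt_eqF.
have e2 : s * (s^-1 * H) = H by rewrite mulVKf ?gt_eqF.
split.
  have : s * Gd <= s * (M * (s^-1 * H)) by rewrite ler_pM2l.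
  rewrite e1 => h5.
  have : M * H <= M * (5 / 4 * X) by apply: ler_wpM2l.
  have : M * (5 / 4 * X) <= 4 / 3 * M * X.
    have -> : 4 / 3 * M * X = M * (4 / 3 * X) by ring.
    apply: ler_wpM2l => //; lra.
  lra.
have : s * (s^-1 * H) <= s * (M * Gd) by rewrite ler_pM2l.
rewrite e2 => h5.
have -> : 4 / 3 * M * (s * Gd) = 4 / 3 * (s * (M * Gd)) by ring.
lra.
Qed.

Lemma assemble (s M : R) (h G g : vec -> vec) (A : set vec) (f : vec -> vec) :
  0 < s -> 0 <= M ->
  (forall x y, 3 / 4 * enorm (x - y) <= enorm (h x - h y) /\ enorm (h x - h y) <= 5 / 4 * enorm (x - y)) ->
  L_bilip_on M setT G -> extends (@Zd R d) G g ->
  (forall a, A a -> h a = s *: zfl s a /\ s *: g (zfl s a) = f a) ->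
  L_bilip_on (4 / 3 * M) setT (fun x => s *: G (s^-1 *: h x)) /\
  extends A (fun x => s *: G (s^-1 *: h x)) f.
Proof.
move=> s0 M0 hb [_ GM] Gext hext; split.
  apply: bilip_pw => x y _ _.
  have [g1 g2] := GM (s^-1 *: h x) (s^-1 *: h y) I I.
  rewrite -scalerBr enormZ gtr0_norm ?invr_gt0 // in g1 g2.
  rewrite -scalerBr enormZ gtr0_norm //.
  have [hb1 hb2] := hb y x.
  exact: ar_o s0 M0 (enorm_ge0 _) g1 g2 hb1 hb2.
move=> a Aa; have [ha ga] := hext a Aa.
by rewrite /= ha scalerA mulVf ?gt_eqF // scale1r Gext //; apply: zfl_Zd.
Qed.

Lemma net_pt (a0 : vec) (i : 'I_d) (t : R) : 0 <= t -> enorm ((a0 + t *: delta_mx ord0 i) - a0) = t.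
Proof.
by move=> t0; rewrite addrAC subrr add0r enormZ enorm_delta mulr1 ger0_norm.
Qed.

Lemma two_pts (A : set vec) (Rn : R) : (0 < d)%N -> 0 < Rn -> is_net Rn A ->
  exists x y, [/\ A x, A y & x != y].
Proof.
move=> d1 Rn0 netA; have [a0 Aa0 _] := netA 0.
set x := a0 + (Rn + 1) *: delta_mx ord0 (Ordinal d1).
have [b Ab hb] := netA x.
exists a0, b; split => //; apply/eqP => e; rewrite -e /x net_pt in hb; lra.
Qed.

Lemma Rn_ge (A : set vec) (r Rn : R) : (0 < d)%N -> 0 < r -> separated r A -> is_net Rn A ->
  r / 2 <= Rn.
Proof.
move=> d1 r0 sepA netA; have [a0 Aa0 _] := netA 0.
set x := a0 + (r / 2) *: delta_mx ord0 (Ordinal d1).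
have hx : enorm (x - a0) = r / 2 by rewrite /x net_pt //; lra.
have [b Ab hb] := netA x.
rewrite leNgt; apply/negP => lt.
have ne : a0 != b by apply/eqP => e; rewrite -e hx in hb; lra.
have := sepA _ _ Aa0 Ab ne.
have := enorm_tri a0 x b; rewrite (enormB a0 x) hx; lra.
Qed.

End Final.

Lemma all_eq0 (R : realType) (x y : 'rV[R]_0) : x = y.
Proof. by apply/rowP => -[]. Qed.

Lemma bilip_triv0 (R : realType) (A : set 'rV[R]_0) f : L_bilip_on 0 A f.
Proof.
split; first by move=> x y _ _ _; apply: all_eq0.
by move=> x y _ _; rewrite (all_eq0 x y) !subrr enorm0 mulr0 lexx.
Qed.

Unset Implicit Arguments.

Theorem theorem1p1 (R : realType) (d : nat) :
  ( (* (i) <-> (ii) *)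
    (forall f : 'rV[R]_d -> 'rV[R]_d, bilip_map_on (@Zd R d) f ->
       exists F : 'rV[R]_d -> 'rV[R]_d,
         bilip_map_on setT F /\ extends (@Zd R d) F f)
    <->
    (forall (A : set 'rV[R]_d), separated_net A ->
     forall f : 'rV[R]_d -> 'rV[R]_d, bilip_map_on A f ->
       exists F : 'rV[R]_d -> 'rV[R]_d,
         bilip_map_on setT F /\ extends A F f) )
  /\
  (forall C : R -> R,
     (forall x, 1 <= x -> 1 <= C x) ->
     (forall x y, 1 <= x -> x <= y -> C x <= C y) ->
     (forall f : 'rV[R]_d -> 'rV[R]_d, bilip_map_on (@Zd R d) f ->
        exists F : 'rV[R]_d -> 'rV[R]_d,
          [/\ bilip_map_on setT F, extends (@Zd R d) F f &
              bilip_on setT F <= C (bilip_on (@Zd R d) f)]) ->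
     forall (A : set 'rV[R]_d) (r Rn : R),
       0 < r -> 0 < Rn -> separated r A -> is_net Rn A ->
     forall f : 'rV[R]_d -> 'rV[R]_d, bilip_map_on A f ->
       let K := 16 * Num.max (3 * d%:R / r) 1 in
       exists F : 'rV[R]_d -> 'rV[R]_d,
         [/\ bilip_map_on setT F, extends A F f &
             bilip_on setT F <=
               K * C (24 * Num.sqrt d%:R * Rn ^+ 2 * K ^+ 3 * bilip_on A f)]).
Proof.
split.
  split.
    move=> H1 A [r [Rn [r0 Rn0 sepA netA]]] f [L fL].
    have [d0|dpos] := posnP d.
      subst d; exists f; split => //; exists 0; exact: bilip_triv0.
    have [a0 Aa0 _] := netA 0.
    have L1 : 1 <= Num.max L 1 by rewrite le_max lexx orbT.
    have fL'' : L_bilip_on (Num.max L 1) A f.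
      apply: bilip_mono fL; by rewrite le_max lexx.
    have [s [h [g [s0 hb gb hext]]]] := construct_all dpos r0 Rn0 L1 sepA netA fL'' Aa0.
    have gb' : bilip_map_on (@Zd R d) g by eexists; exact: gb.
    have [G [[M' GM'] Gext]] := H1 g gb'.
    have GM'' : L_bilip_on (Num.max M' 0) setT G by apply: bilip_mono GM'; rewrite le_max lexx.
    have M0 : 0 <= Num.max M' 0 by rewrite le_max lexx orbT.
    have [FB Fext] := assemble s0 M0 hb GM'' Gext hext.
    by exists (fun x => s *: G (s^-1 *: h x)); split => //; exists (4 / 3 * Num.max M' 0).
  move=> H2 f fb; exact: H2 _ (Zd_separated_net R d) f fb.
move=> C C1 Cmono HC A r Rn r0 Rn0 sepA netA f fb K.
have K16 : 16 <= K by rewrite /K -{1}(mulr1 16) ler_pM2l // le_max lexx orbT.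
have [d0|dpos] := posnP d.
  subst d; exists f; split => //; first by exists 0; exact: bilip_triv0.
  have fb0 : bilip_map_on (@Zd R 0) f by exists 0; exact: bilip_triv0.
  have [F0 [_ _ hF0]] := HC f fb0.
  rewrite !(bilip_trivial _ _ (@all_eq0 R)) in hF0 *.
  rewrite mulr0n sqrtr0 !mulr0 ?mul0r; apply: mulr_ge0 => //; lra.
have [x0 [y0 [Ax0 Ay0 xy0]]] := two_pts dpos Rn0 netA.
have [L0 fL0'] := fb.
have [L01 fL0] := bilip_self Ax0 Ay0 xy0 fL0'.
have [a0 Aa0 _] := netA 0.
have [s [h [g [s0 hb gb hext]]]] := construct_all dpos r0 Rn0 L01 sepA netA fL0 Aa0.
have gb' : bilip_map_on (@Zd R d) g by eexists; exact: gb.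
have [G [[M1 GM1] Gext GC]] := HC g gb'.
set MM' := 10 * bilip_on A f * d%:R * (2 * (Rn / r) + 5 / 4) in gb.
have e0 := @delta_neq0 R d (Ordinal dpos).
have [B1 _] := bilip_self (@Zd0 R d) (@delta_Zd R d (Ordinal dpos)) e0 gb.
have dR1 : (1 : R) <= d%:R by rewrite ler1n.
have MM0 : 0 <= MM'.
  apply: le_trans (ar_l L01 dR1 (divr_ge0 (ltW Rn0) (ltW r0))); lra.
have BM := bilip_le MM0 gb.
have [M'1 GM'] := bilip_self (x0 := 0) (y0 := delta_mx ord0 (Ordinal dpos)) I I e0 GM1.
set M' := bilip_on setT G in M'1 GM' GC.
have M0 : 0 <= M' by lra.
have [FB Fext] := assemble s0 M0 hb GM' Gext hext.
exists (fun x => s *: G (s^-1 *: h x)); split => //; first by exists (4 / 3 * M').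
set T := 24 * Num.sqrt d%:R * Rn ^+ 2 * K ^+ 3 * bilip_on A f.
have sq1 : 1 <= Num.sqrt (d%:R : R).
  apply: (@le_trans _ _ (Num.sqrt 1)); first by rewrite sqrtr1.
  by rewrite ler_sqrt ?ler0n.
have KK : 16 * (3 * d%:R / r) <= K by rewrite /K ler_pM2l // le_max lexx.
have MT : MM' <= T := ar_T L01 dR1 r0 (Rn_ge dpos r0 sepA netA) K16 KK sq1.
have BT : bilip_on (@Zd R d) g <= T by apply: le_trans BM MT.
have CB := Cmono _ _ B1 BT.
have T1 : 1 <= T by apply: le_trans B1 BT.
have CT1 := C1 _ T1.
apply: le_trans (bilip_le _ FB) _; first by apply: mulr_ge0 => //; lra.
have h1 : M' <= C T by apply: le_trans GC CB.
have h2 : 4 / 3 * M' <= 4 / 3 * C T by apply: ler_wpM2l => //; lra.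
apply: le_trans h2 _; apply: ler_wpM2r; lra.
Qed.
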